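(* Let $K$ be either $\{1,2,3\}$ or $\{1,2,4\}$. The set of all groupoid identities $p=q$ satisfying the following conditions forms a basis for $\Sigma_K$. Every variable $x$ occurring in $p$ or $q$ either occurs exactly once in $p$ and exactly once in $q$, or occurs exactly twice in $p$ and exactly twice in $q$. If $x$ occurs exactly once in both $p$ and $q$, then the color of $x$ is the same in $p$ and in $q$. If $x$ occurs twice, then: for $K=\{1,2,3\}$, its two occurrences have colors $\alpha$ and $\beta$ in one of the terms and colors $\gamma$ and $1$ in the other; for $K=\{1,2,4\}$, its two occurrences have colors $\alpha$ and $\gamma$ in one of the terms and colors $\beta$ and $1$ in the other.
   Context: Let $f_1(x,y)=x+y$, $f_2(x,y)=x-y$, $f_3(x,y)=-x+y$, $f_4(x,y)=-x-y$ on $\mathbb{Z}$. For $K\subseteq\{1,2,3,4\}$, $\Sigma_K$ is the set of groupoid identities satisfied in $\mathbb{Z}$ by $f_k$ for every $k\in K$. Let $\mathbf{KL}=\{1,\alpha,\beta,\gamma\}$ be the Klein 4-group ($\alpha^2=\beta^2=1$, $\alpha\beta=\gamma$). The color of an occurrence of a variable in a term $p$ is the element of $\mathbf{KL}$ obtained by following the path from the whole term down to that occurrence, starting with $1$ and multiplying by $\alpha$ each time one passes to the left factor of a product and by $\beta$ each time one passes to the right factor. A basis for $\Sigma_K$ is a set of identities whose equational consequences are exactly $\Sigma_K$. *)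

(* Defs.v *)
From mathcomp Require Import all_boot all_algebra.
Set Implicit Arguments. Unset Strict Implicit. Unset Printing Implicit Defensive.
Import GRing.Theory.
Local Open Scope ring_scope.

Inductive term : Type :=
| Var of nat
| Op of term & term.

Fixpoint vars (t : term) : seq nat :=
  match t with Var x => [:: x] | Op l r => vars l ++ vars r end.

Fixpoint subst (s : nat -> term) (t : term) : term :=
  match t with Var x => s x | Op l r => Op (subst s l) (subst s r) end.

Definition fop (k : nat) (x y : int) : int :=
  match k with
  | 1%N => x + y
  | 2%N => x - y
  | 3%N => - x + y
  | 4%N => - x - y
  | _ => 0
  end.

Fixpoint eval (k : nat) (v : nat -> int) (t : term) : int :=
  match t with Var x => v x | Op l r => fop k (eval k v l) (eval k v r) end.

Definition Sigma (K : seq nat) (p q : term) : Prop :=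
  forall k, k \in K -> forall v : nat -> int, eval k v p = eval k v q.

Inductive derivable (E : term -> term -> Prop) : term -> term -> Prop :=
| der_ax p q (s : nat -> term) : E p q -> derivable E (subst s p) (subst s q)
| der_refl p : derivable E p p
| der_sym p q : derivable E p q -> derivable E q p
| der_trans p q r : derivable E p q -> derivable E q r -> derivable E p r
| der_op p1 p2 q1 q2 : derivable E p1 q1 -> derivable E p2 q2 ->
    derivable E (Op p1 p2) (Op q1 q2).

Definition is_basis (B S : term -> term -> Prop) : Prop :=
  forall p q, derivable B p q <-> S p q.

Definition klein := (bool * bool)%type.
Definition kmul (a b : klein) : klein := (xorb a.1 b.1, xorb a.2 b.2).
Definition k1 : klein := (false, false).
Definition kalpha : klein := (true, false).
Definition kbeta : klein := (false, true).
Definition kgamma : klein := (true, true).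

(* colors of the occurrences of x in t (left to right), the path color
   accumulated so far being c *)
Fixpoint occ_colors (x : nat) (c : klein) (t : term) : seq klein :=
  match t with
  | Var y => if y == x then [:: c] else [::]
  | Op l r => occ_colors x (kmul c kalpha) l ++ occ_colors x (kmul c kbeta) r
  end.

Definition colors (x : nat) (t : term) : seq klein := occ_colors x k1 t.

Definition basis_cond (a b c d : klein) (p q : term) : Prop :=
  forall x, x \in vars p ++ vars q ->
    (exists col, colors x p = [:: col] /\ colors x q = [:: col]) \/
    (size (colors x p) = 2%N /\ size (colors x q) = 2%N /\
      ((perm_eq (colors x p) [:: a; b] /\ perm_eq (colors x q) [:: c; d]) \/
       (perm_eq (colors x p) [:: c; d] /\ perm_eq (colors x q) [:: a; b]))).

Definition basis123 : term -> term -> Prop := basis_cond kalpha kbeta kgamma k1.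
Definition basis124 : term -> term -> Prop := basis_cond kalpha kgamma kbeta k1.

(* Main.v *)
Require Import Defs.
From mathcomp Require Import all_boot all_algebra zify ring lra.
Set Implicit Arguments. Unset Strict Implicit. Unset Printing Implicit Defensive.
Import GRing.Theory.
Local Open Scope ring_scope.

Fixpoint leaves_c (c : klein) (t : term) : seq (nat * klein) :=
  match t with
  | Var x => [:: (x, c)]
  | Op l r => leaves_c (kmul c kalpha) l ++ leaves_c (kmul c kbeta) r
  end.

Definition chi (k : nat) (c : klein) : int :=
  match k with
  | 1%N => 1
  | 2%N => if c.2 then -1 else 1
  | 3%N => if c.1 then -1 else 1
  | 4%N => if xorb c.1 c.2 then -1 else 1
  | _ => 0
  end.

Lemma chi_mul k c e : chi k (kmul c e) = chi k c * chi k e.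
Proof.
case: c e => [[] []] [[] []]; do 5?(case: k => [|k]) => //=; lia.
Qed.

Lemma fop_chi k c a b : chi k c * fop k a b = chi k c * (chi k kalpha * a + chi k kbeta * b).
Proof. do 5?(case: k => [|k]) => /=; try ring. Qed.

Lemma eval_leaves k v c t :
  chi k c * eval k v t = \sum_(l <- leaves_c c t) chi k l.2 * v l.1.
Proof.
elim: t c => [x|l IHl r IHr] c /=.
  by rewrite big_cons big_nil addr0.
rewrite big_cat /= -IHl -IHr fop_chi !chi_mul; ring.
Qed.

Lemma eval_sum k v t : k \in [:: 1; 2; 3; 4]%N ->
  eval k v t = \sum_(l <- leaves_c k1 t) chi k l.2 * v l.1.
Proof.
move=> hk; rewrite -eval_leaves.
have -> : chi k k1 = 1 by move: hk; rewrite !inE => /or4P [] /eqP ->.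
by rewrite mul1r.
Qed.

Lemma vars_leaves c t : map fst (leaves_c c t) = vars t.
Proof. by elim: t c => [x|l IHl r IHr] c //=; rewrite map_cat IHl IHr. Qed.

Lemma colors_leaves x c t :
  occ_colors x c t = [seq l.2 | l <- leaves_c c t & l.1 == x].
Proof.
elim: t c => [y|l IHl r IHr] c /=; last by rewrite filter_cat map_cat IHl IHr.
by case: (y == x).
Qed.

Lemma group_sum (L : seq (nat * klein)) (U : seq nat) (F : nat -> klein -> int) :
  uniq U -> {subset map fst L <= U} ->
  \sum_(l <- L) F l.1 l.2 =
  \sum_(x <- U) \sum_(c <- [seq l.2 | l <- L & l.1 == x]) F x c.
Proof.
move=> uU; elim: L => [|[y c] L IH] sub.
  by rewrite big_nil big1 // => x _; rewrite big_nil.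
rewrite big_cons IH; last by move=> z hz; apply: sub; rewrite inE hz orbT.
have yU : y \in U by apply: sub; rewrite inE eqxx.
rewrite (bigD1_seq y) //= [in RHS](bigD1_seq y) //= eqxx big_cons /= addrA.
congr (_ + _); apply: eq_bigr => x /negbTE hx /=.
by rewrite eq_sym hx.
Qed.

Lemma eval_subst k v s t :
  eval k v (subst s t) = eval k (fun x => eval k v (s x)) t.
Proof. by elim: t => //= l -> r ->. Qed.

Lemma sound (B : term -> term -> Prop) (K : seq nat) :
  (forall p q, B p q -> Sigma K p q) ->
  forall p q, derivable B p q -> Sigma K p q.
Proof.
move=> HB p q; elim => {p q}.
- move=> p q s /HB h k hk v; rewrite !eval_subst; exact: h.
- by [].
- by move=> p q _ h k hk v; rewrite h.
- by move=> p q r _ h1 _ h2 k hk v; rewrite h1 // h2.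
- by move=> p1 p2 q1 q2 _ h1 _ h2 k hk v /=; rewrite h1 // h2.
Qed.

Lemma basis_sound (a b c d : klein) (K : seq nat) :
  {subset K <= [:: 1; 2; 3; 4]%N} ->
  (forall k, k \in K -> chi k a + chi k b = chi k c + chi k d) ->
  forall p q, basis_cond a b c d p q -> Sigma K p q.
Proof.
move=> sK hch p q hb k hk v.
rewrite !eval_sum ?sK //.
pose U := undup (vars p ++ vars q).
have uU : uniq U by apply: undup_uniq.
rewrite (group_sum (fun x c => chi k c * v x) uU); last first.
  by move=> x; rewrite vars_leaves mem_undup mem_cat => ->.
rewrite (group_sum (fun x c => chi k c * v x) uU); last first.
  by move=> x; rewrite vars_leaves mem_undup mem_cat orbC => ->.
rewrite big_seq [RHS]big_seq; apply: eq_bigr => x hx.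
rewrite mem_undup in hx.
rewrite -!colors_leaves.
have e2 : forall s t, perm_eq s [:: a; b] -> perm_eq t [:: c; d] ->
    \sum_(c0 <- s) chi k c0 * v x = \sum_(c0 <- t) chi k c0 * v x.
  move=> s t hs ht; rewrite (perm_big _ hs) (perm_big _ ht).
  rewrite !big_cons !big_nil /= !addr0 -!mulrDl hch //.
move: (hb x hx); rewrite /colors => -[[col [hp hq]]|[_ [_ [[h1 h2]|[h1 h2]]]]].
  by rewrite hp hq.
  exact: e2.
by symmetry; apply: e2.
Qed.

Lemma sum_count k x (L : seq (nat * klein)) :
  \sum_(l <- L) chi k l.2 * (l.1 == x)%:R =
  chi k k1 * (count_mem (x, k1) L)%:R + chi k kalpha * (count_mem (x, kalpha) L)%:R +
  chi k kbeta * (count_mem (x, kbeta) L)%:R + chi k kgamma * (count_mem (x, kgamma) L)%:R.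
Proof.
elim: L => [|[y c] L IH]; first by rewrite big_nil /=; ring.
rewrite big_cons IH /= !natrD.
case: (eqVneq y x) => [->|ne].
  case: c => [[] []]; rewrite !xpair_eqE !eqxx /=; ring.
have nx : forall c', ((y, c) == (x, c')) = false by move=> c'; rewrite xpair_eqE (negbTE ne).
rewrite !nx /=; ring.
Qed.

Definition cnt (t : term) (e : nat * klein) : nat := count_mem e (leaves_c k1 t).
Definition sp (p q : term) (e : nat * klein) : nat := (cnt p e - cnt q e)%N.

Lemma Sigma_eq K p q k x : Sigma K p q -> k \in K -> {subset K <= [:: 1; 2; 3; 4]%N} ->
  chi k k1 * (cnt p (x, k1))%:R + chi k kalpha * (cnt p (x, kalpha))%:R +
  chi k kbeta * (cnt p (x, kbeta))%:R + chi k kgamma * (cnt p (x, kgamma))%:R =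
  chi k k1 * (cnt q (x, k1))%:R + chi k kalpha * (cnt q (x, kalpha))%:R +
  chi k kbeta * (cnt q (x, kbeta))%:R + chi k kgamma * (cnt q (x, kgamma))%:R :> int.
Proof.
move=> hS hk sK; rewrite /cnt -!sum_count.
have := hS k hk (fun y => (y == x)%:R); rewrite !eval_sum ?sK //.
Qed.

Lemma H123 p q : Sigma [:: 1; 2; 3]%N p q -> forall x, exists m1 m2,
  (m1 = 0 \/ m2 = 0)%N /\ forall col,
   sp p q (x, col) = (if col \in [:: kgamma; k1] then m1 else m2) /\
   sp q p (x, col) = (if col \in [:: kalpha; kbeta] then m1 else m2).
Proof.
move=> hS x.
have sK : {subset [:: 1; 2; 3]%N <= [:: 1; 2; 3; 4]%N} by move=> k; rewrite !inE => /or3P [] ->; rewrite ?orbT.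
have e1 := @Sigma_eq [:: 1; 2; 3]%N p q 1%N x hS isT sK.
have e2 := @Sigma_eq [:: 1; 2; 3]%N p q 2%N x hS isT sK.
have e3 := @Sigma_eq [:: 1; 2; 3]%N p q 3%N x hS isT sK.
move: e1 e2 e3; rewrite /sp /chi /= !mul1r !mulN1r !natz => e1 e2 e3.
have f1 : (cnt p (x, k1))%:Z + (cnt p (x, kalpha))%:Z + (cnt p (x, kbeta))%:Z + (cnt p (x, kgamma))%:Z = (cnt q (x, k1))%:Z + (cnt q (x, kalpha))%:Z + (cnt q (x, kbeta))%:Z + (cnt q (x, kgamma))%:Z := e1.
have f2 : (cnt p (x, k1))%:Z + (cnt p (x, kalpha))%:Z - (cnt p (x, kbeta))%:Z - (cnt p (x, kgamma))%:Z = (cnt q (x, k1))%:Z + (cnt q (x, kalpha))%:Z - (cnt q (x, kbeta))%:Z - (cnt q (x, kgamma))%:Z := e2.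
have f3 : (cnt p (x, k1))%:Z - (cnt p (x, kalpha))%:Z + (cnt p (x, kbeta))%:Z - (cnt p (x, kgamma))%:Z = (cnt q (x, k1))%:Z - (cnt q (x, kalpha))%:Z + (cnt q (x, kbeta))%:Z - (cnt q (x, kgamma))%:Z := e3.
clear e1 e2 e3.
exists (cnt p (x, kgamma) - cnt q (x, kgamma))%N, (cnt p (x, kalpha) - cnt q (x, kalpha))%N; rewrite /sp; move: f1 f2 f3; rewrite /k1 /kalpha /kbeta /kgamma => f1 f2 f3.
split; first lia.
case=> [[] []] /=; split; lia.
Qed.

Lemma H124 p q : Sigma [:: 1; 2; 4]%N p q -> forall x, exists m1 m2,
  (m1 = 0 \/ m2 = 0)%N /\ forall col,
   sp p q (x, col) = (if col \in [:: kbeta; k1] then m1 else m2) /\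
   sp q p (x, col) = (if col \in [:: kalpha; kgamma] then m1 else m2).
Proof.
move=> hS x.
have sK : {subset [:: 1; 2; 4]%N <= [:: 1; 2; 3; 4]%N} by move=> k; rewrite !inE => /or3P [] ->; rewrite ?orbT.
have e1 := @Sigma_eq [:: 1; 2; 4]%N p q 1%N x hS isT sK.
have e2 := @Sigma_eq [:: 1; 2; 4]%N p q 2%N x hS isT sK.
have e3 := @Sigma_eq [:: 1; 2; 4]%N p q 4%N x hS isT sK.
move: e1 e2 e3; rewrite /sp /chi /= !mul1r !mulN1r !natz => e1 e2 e3.
have f1 : (cnt p (x, k1))%:Z + (cnt p (x, kalpha))%:Z + (cnt p (x, kbeta))%:Z + (cnt p (x, kgamma))%:Z = (cnt q (x, k1))%:Z + (cnt q (x, kalpha))%:Z + (cnt q (x, kbeta))%:Z + (cnt q (x, kgamma))%:Z := e1.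
have f2 : (cnt p (x, k1))%:Z + (cnt p (x, kalpha))%:Z - (cnt p (x, kbeta))%:Z - (cnt p (x, kgamma))%:Z = (cnt q (x, k1))%:Z + (cnt q (x, kalpha))%:Z - (cnt q (x, kbeta))%:Z - (cnt q (x, kgamma))%:Z := e2.
have f3 : (cnt p (x, k1))%:Z - (cnt p (x, kalpha))%:Z - (cnt p (x, kbeta))%:Z + (cnt p (x, kgamma))%:Z = (cnt q (x, k1))%:Z - (cnt q (x, kalpha))%:Z - (cnt q (x, kbeta))%:Z + (cnt q (x, kgamma))%:Z := e3.
clear e1 e2 e3.
exists (cnt p (x, kbeta) - cnt q (x, kbeta))%N, (cnt p (x, kalpha) - cnt q (x, kalpha))%N; rewrite /sp; move: f1 f2 f3; rewrite /k1 /kalpha /kbeta /kgamma => f1 f2 f3.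
split; first lia.
case=> [[] []] /=; split; lia.
Qed.

Fixpoint annot (T : eqType) (s : seq T) : seq (T * nat) :=
  match s with
  | [::] => [::]
  | e :: s' => (e, count_mem e s') :: annot s'
  end.

Lemma annot_fst (T : eqType) (s : seq T) : map fst (annot s) = s.
Proof. by elim: s => //= e s ->. Qed.

Lemma mem_annot (T : eqType) (s : seq T) e k :
  ((e, k) \in annot s) = (k < count_mem e s)%N.
Proof.
elim: s => [|e' s IH] //=; rewrite inE IH xpair_eqE.
case: (eqVneq e e') => [->|ne] /=; last by rewrite add0n.
by rewrite add1n ltnS [RHS]leq_eqVlt.
Qed.

Lemma annot_uniq (T : eqType) (s : seq T) : uniq (annot s).
Proof.
elim: s => //= e s ->; rewrite andbT mem_annot ltnn //.
Qed.

Fixpoint relab (t : term) (s : seq nat) : term :=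
  match t with
  | Var _ => Var (head 0%N s)
  | Op l r => Op (relab l (take (size (vars l)) s)) (relab r (drop (size (vars l)) s))
  end.

Lemma leaves_relab (X : Type) c t (A : seq X) (f : X -> nat) (g : X -> klein) :
  map g A = map snd (leaves_c c t) ->
  leaves_c c (relab t (map f A)) = map (fun z => (f z, g z)) A.
Proof.
elim: t c A => [x|l IHl r IHr] c A /=.
  by case: A => [|z [|z' A]] //= [->].
rewrite map_cat => hA.
have sz : size (vars l) = size (map snd (leaves_c (kmul c kalpha) l)).
  by rewrite size_map -(vars_leaves (kmul c kalpha)) size_map.
rewrite -map_take -map_drop IHl ?IHr -?map_cat ?cat_take_drop //.
  by rewrite map_drop hA sz drop_size_cat.
by rewrite map_take hA sz take_size_cat.
Qed.

Lemma subst_relab t s (dec : nat -> nat) :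
  map dec s = vars t -> subst (fun y => Var (dec y)) (relab t s) = t.
Proof.
elim: t s => [x|l IHl r IHr] s /=.
  by case: s => [|y [|y' s]] //= [->].
move=> hs; rewrite IHl ?IHr //.
  by rewrite map_drop hs drop_size_cat.
by rewrite map_take hs take_size_cat.
Qed.

Definition code (s : nat * klein -> nat) (z : (nat * klein) * nat) : nat :=
  if (z.2 < s z.1)%N then pickle (z.1.1, @None klein, z.2)
  else pickle (z.1.1, Some z.1.2, (z.2 - s z.1)%N).

Definition dec (y : nat) : nat :=
  match @unpickle (nat * option klein * nat)%type y with
  | Some (x, _, _) => x
  | None => 0%N
  end.

Lemma dec_code s z : dec (code s z) = z.1.1.
Proof. by rewrite /code /dec; case: ifP => _; rewrite pickleK. Qed.

Lemma code_single s z x c j :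
  (code s z == pickle (x, Some c, j)) = (z == ((x, c), (j + s (x, c)))%N).
Proof.
case: z => [[x' c'] k]; rewrite /code /=.
case: ltnP => h; rewrite (inj_eq (pcan_inj pickleK)) !xpair_eqE /=.
  have -> : (None == Some c) = false by [].
  rewrite andbF /=.
  case: (eqVneq x' x) => [<-|nx] /=; last by [].
  case: (eqVneq c' c) => [<-|nc] //=.
  by symmetry; apply/negbTE/eqP => E; move: h; rewrite E ltnNge leq_addl.
case: (eqVneq x' x) => [<-|nx] /=; last by [].
have -> : (Some c' == Some c) = (c' == c) by [].
case: (eqVneq c' c) => [<-|nc] //=.
move: h; case: (s _) => [|n] h; apply/eqP/eqP; lia.
Qed.

Lemma code_pair s z x k :
  (code s z == pickle (x, @None klein, k)) = [&& z.1.1 == x, z.2 == k & (k < s z.1)%N].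
Proof.
case: z => [[x' c'] k']; rewrite /code /=.
case: ltnP => h; rewrite (inj_eq (pcan_inj pickleK)) !xpair_eqE /= ?andbF //.
  by case: (eqVneq k' k) => [<-|_]; rewrite ?h ?andbF ?andbT //= andbT.
by case: (eqVneq k' k) => [<-|_]; rewrite ?andbF //= ltnNge h andbF.
Qed.

Definition mk p q := relab p (map (code (sp p q)) (annot (leaves_c k1 p))).

Lemma leaves_mk p q : leaves_c k1 (mk p q) =
  map (fun z => (code (sp p q) z, z.1.2)) (annot (leaves_c k1 p)).
Proof.
apply: leaves_relab.
by rewrite -[in RHS](annot_fst (leaves_c k1 p)) -map_comp.
Qed.

Lemma vars_mk p q : vars (mk p q) = map (code (sp p q)) (annot (leaves_c k1 p)).
Proof. by rewrite -(vars_leaves k1) leaves_mk -map_comp. Qed.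

Lemma subst_mk p q : subst (fun y => Var (dec y)) (mk p q) = p.
Proof.
apply: subst_relab.
rewrite -map_comp -(vars_leaves k1) -[in RHS](annot_fst (leaves_c k1 p)) -map_comp.
by apply: eq_map => z /=; rewrite dec_code.
Qed.

Lemma count_colors_mk p q y c0 :
  count_mem c0 (colors y (mk p q)) =
  count (fun z => (code (sp p q) z == y) && (z.1.2 == c0)) (annot (leaves_c k1 p)).
Proof.
rewrite /colors colors_leaves leaves_mk count_map count_filter count_map.
by apply: eq_count => z /=; rewrite andbC.
Qed.

Lemma count_eq1 (T : eqType) (A : seq T) z0 (b : bool) (P : pred T) :
  uniq A -> (forall z, P z = (z == z0) && b) -> count P A = (b && (z0 \in A)).
Proof.
move=> uA h; rewrite (eq_count h); case: b {h} => /=.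
  rewrite -count_uniq_mem //; apply: eq_count => z; by rewrite andbT.
by rewrite (eq_count (fun z => andbF _)) count_pred0.
Qed.

Lemma sp_le p q e : (sp p q e <= cnt p e)%N.
Proof. by rewrite /sp leq_subr. Qed.

Lemma pair_count (p q : term) (x k : nat) (c0 : klein) :
  count_mem c0 (colors (pickle (x, @None klein, k)) (mk p q)) = (k < sp p q (x, c0))%N.
Proof.
rewrite count_colors_mk (@count_eq1 _ _ ((x, c0), k) (k < sp p q (x, c0))%N).
- rewrite mem_annot; case: ltnP => // h /=.
  by rewrite (leq_trans h (sp_le _ _ _)).
- exact: annot_uniq.
move=> [[x' c'] k']; rewrite code_pair /= !xpair_eqE.
by case: (eqVneq x' x) => [<-|]; case: (eqVneq k' k) => [<-|]; case: (eqVneq c' c0) => [<-|]; rewrite /= ?andbF ?andbT.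
Qed.

Lemma single_count (p q : term) (x : nat) (c : klein) (j : nat) (c0 : klein) :
  count_mem c0 (colors (pickle (x, Some c, j)) (mk p q)) =
  (c == c0) && (j + sp p q (x, c) < cnt p (x, c))%N.
Proof.
rewrite count_colors_mk (@count_eq1 _ _ ((x, c), (j + sp p q (x, c))%N) (c == c0)).
- by rewrite mem_annot.
- exact: annot_uniq.
move=> z; rewrite code_single.
by case: (eqVneq z ((x, c), (j + sp p q (x, c))%N)) => [->|].
Qed.

Lemma perm2 (u w : klein) s : u != w ->
  (forall c0, count_mem c0 s = (c0 \in [:: u; w])) -> perm_eq s [:: u; w].
Proof.
move=> nuw h; apply/allP => c0 _; apply/eqP; rewrite h count_uniq_mem //=.
by rewrite inE nuw.
Qed.

Lemma perm1 (u : klein) s :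
  (forall c0, count_mem c0 s = (u == c0)) -> s = [:: u].
Proof.
move=> h; apply: perm_small_eq => //; apply/allP => c0 _; apply/eqP.
by rewrite h /= addn0.
Qed.

Definition ycond (a b c d : klein) (p q : term) (x : nat) : Prop :=
    (exists col, colors x p = [:: col] /\ colors x q = [:: col]) \/
    (size (colors x p) = 2%N /\ size (colors x q) = 2%N /\
      ((perm_eq (colors x p) [:: a; b] /\ perm_eq (colors x q) [:: c; d]) \/
       (perm_eq (colors x p) [:: c; d] /\ perm_eq (colors x q) [:: a; b]))).

Lemma ycond_sym a b c d p q x : ycond a b c d p q x -> ycond a b c d q p x.
Proof.
case=> [[col [h1 h2]]|[s1 [s2 [[h1 h2]|[h1 h2]]]]].
- by left; exists col.
- by right; split=> //; split=> //; right.
- by right; split=> //; split=> //; left.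
Qed.

Definition Hyp (a b c d : klein) p q := forall x, exists m1 m2,
  (m1 = 0 \/ m2 = 0)%N /\ forall col,
   sp p q (x, col) = (if col \in [:: c; d] then m1 else m2) /\
   sp q p (x, col) = (if col \in [:: a; b] then m1 else m2).

Lemma arith (a b k : nat) : (k < a)%N -> (a - b <= k)%N -> (k - (a - b) + (b - a) < b)%N.
Proof. lia. Qed.

Lemma cond_left (a b c d : klein) p q :
  a != b -> c != d -> (forall col, (col \in [:: a; b]) = ~~ (col \in [:: c; d])) ->
  Hyp a b c d p q ->
  forall y, y \in vars (mk p q) -> ycond a b c d (mk p q) (mk q p) y.
Proof.
move=> nab ncd compl H y; rewrite vars_mk => /mapP [[[x col] k] zin ->].
rewrite mem_annot in zin.
rewrite /code /=; case: ltnP => hs.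
- have [m1 [m2 [hm hsp]]] := H x.
  right.
  have cP := pair_count p q x k; have cQ := pair_count q p x k.
  have [e1 _] := hsp col; rewrite e1 in hs.
  case: hm => hm; subst.
  + have hk : (k < m2)%N by move: hs; case: ifP.
    have pP : perm_eq (colors (pickle (x, @None klein, k)) (mk p q)) [:: a; b].
      apply: perm2 => // c0; rewrite cP compl; have [-> _] := hsp c0.
      by case: (_ \in _) => /=; rewrite ?hk ?ltn0.
    have pQ : perm_eq (colors (pickle (x, @None klein, k)) (mk q p)) [:: c; d].
      apply: perm2 => // c0; rewrite cQ; have [_ ->] := hsp c0; rewrite compl.
      by case: (_ \in _) => /=; rewrite ?hk ?ltn0.
    by rewrite (perm_size pP) (perm_size pQ); do 2 split=> //; left.
  + have hk : (k < m1)%N by move: hs; case: ifP.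
    have pP : perm_eq (colors (pickle (x, @None klein, k)) (mk p q)) [:: c; d].
      apply: perm2 => // c0; rewrite cP; have [-> _] := hsp c0.
      by case: (_ \in _) => /=; rewrite ?hk ?ltn0.
    have pQ : perm_eq (colors (pickle (x, @None klein, k)) (mk q p)) [:: a; b].
      apply: perm2 => // c0; rewrite cQ; have [_ ->] := hsp c0.
      by case: (_ \in _) => /=; rewrite ?hk ?ltn0.
    by rewrite (perm_size pP) (perm_size pQ); do 2 split=> //; right.
- left; exists col; split; apply: perm1 => c0.
  + have Ec := single_count p q x col (k - sp p q (x,col)) c0.
    by rewrite Ec subnK //; case: (col == c0) => //=; rewrite /cnt zin.
  + have Ec := single_count q p x col (k - sp p q (x,col)) c0.
    rewrite Ec; case: (col == c0) => //=.
    by move: zin hs; rewrite /sp /cnt => h1 h2; rewrite (arith h1 h2).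
Qed.

Lemma complete (a b c d : klein) p q :
  a != b -> c != d -> (forall col, (col \in [:: a; b]) = ~~ (col \in [:: c; d])) ->
  Hyp a b c d p q -> Hyp a b c d q p -> derivable (basis_cond a b c d) p q.
Proof.
move=> nab ncd compl H1 H2.
have hb : basis_cond a b c d (mk p q) (mk q p).
  move=> y; rewrite mem_cat => /orP [hy|hy].
    exact: cond_left.
  by apply: ycond_sym; apply: cond_left.
have := @der_ax _ (mk p q) (mk q p) (fun y => Var (dec y)) hb.
by rewrite !subst_mk.
Qed.

Lemma Sigma_sym K p q : Sigma K p q -> Sigma K q p.
Proof. by move=> h k hk v; rewrite h. Qed.

Theorem lemma2p2 :
  is_basis basis123 (Sigma [:: 1; 2; 3]%N) /\
  is_basis basis124 (Sigma [:: 1; 2; 4]%N).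
Proof.
split=> p q; split.
- apply: sound; apply: basis_sound.
    by move=> k; rewrite !inE => /or3P [] ->; rewrite ?orbT.
  by move=> k; rewrite !inE => /or3P [] /eqP ->.
- move=> hS; apply: complete => //; first by case=> [[] []].
    exact: H123.
  by apply: H123; apply: Sigma_sym.
- apply: sound; apply: basis_sound.
    by move=> k; rewrite !inE => /or3P [] ->; rewrite ?orbT.
  by move=> k; rewrite !inE => /or3P [] /eqP ->.
- move=> hS; apply: complete => //; first by case=> [[] []].
    exact: H124.
  by apply: H124; apply: Sigma_sym.
Qed.
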